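(* Let $\mathbb{F}$ be a field, $n\ge1$, and $d=pq$ with integers $p,q\ge1$. For every $n^{d}\times n^{d}$ matrix $M$, $\mathrm{PT\text{-}rank}_{[n]^{pq}}(M)\le\mathrm{PT\text{-}rank}_{[n^p]^q}(M)$.
   Context: $\mathrm{PT\text{-}rank}_{[n]^{pq}}(M)$ is the PT-rank of $M$ viewed as an $n^{pq}\times n^{pq}$ matrix with rows/columns indexed by $[n]^{pq}$; $\mathrm{PT\text{-}rank}_{[n^p]^q}(M)$ is the PT-rank of the same matrix viewed as an $(n^p)^q\times(n^p)^q$ matrix, where each of the $q$ coordinates in $[n^p]$ encodes a consecutive block of $p$ coordinates in $[n]$ (coordinates $(l-1)p+1,\dots,lp$ for the $l$-th). For a matrix indexed by $[N]^m$: $M^{\top_k}$ ($k\in[m]$) swaps the $k$-th row index with the $k$-th column index, $M^{\top_\kappa}$ composes these over $k\in\kappa\subseteq[m]$, $M$ is PT-basic if $\mathrm{rank}(M^{\top_\kappa})=1$ for some $\kappa$, and the PT-rank is the least number of PT-basic matrices summing to $M$. *)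

(* Defs.v *)
From HB Require Import structures.
From mathcomp Require Import all_boot all_order all_algebra.
From Stdlib Require Import ClassicalEpsilon.
Set Implicit Arguments. Unset Strict Implicit. Unset Printing Implicit Defensive.
Import GRing.Theory.
Local Open Scope ring_scope.

Section PT.
Variables (F : fieldType) (K : finType) (m : nat).

(* Multi-indices in K^m; K plays the role of [N]. *)
Definition midx := {ffun 'I_m -> K}.
Definition ptmx := {ffun midx * midx -> F}.

Definition ptmx_rank (M : ptmx) : nat :=
  \rank (\matrix_(a < #|{: midx}|, b < #|{: midx}|) M (enum_val a, enum_val b)).

(* Swap the k-th row index with the k-th column index for all k in kappa;
   this is the composition of the partial transposes M^{T_k}, k in kappa
   (these commute). *)
Definition ptswap (kappa : {set 'I_m}) (rc : midx * midx) : midx * midx :=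
  ([ffun i => if i \in kappa then rc.2 i else rc.1 i],
   [ffun i => if i \in kappa then rc.1 i else rc.2 i]).

Definition ptrans (kappa : {set 'I_m}) (M : ptmx) : ptmx :=
  [ffun rc => M (ptswap kappa rc)].

Definition pt_basic (M : ptmx) : Prop :=
  exists kappa : {set 'I_m}, ptmx_rank (ptrans kappa M) = 1%N.

Definition pt_decomp (M : ptmx) (r : nat) : Prop :=
  exists s : seq ptmx,
    [/\ size s = r, (forall A, A \in s -> pt_basic A) & \sum_(A <- s) A = M].

Definition pt_decompb (M : ptmx) (r : nat) : bool :=
  if excluded_middle_informative (pt_decomp M r) then true else false.

Lemma pt_decompbP M r : reflect (pt_decomp M r) (pt_decompb M r).
Proof.
rewrite /pt_decompb; case: excluded_middle_informative => H; constructor => //.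
Qed.

Lemma ptrans_set0 (A : ptmx) : ptrans set0 A = A.
Proof.
apply/ffunP => -[r c]; rewrite ffunE /ptswap /=.
congr (A (_, _)); apply/ffunP => i; by rewrite ffunE inE.
Qed.

Lemma pt_basic_elem (ab : midx * midx) (x : F) : x != 0 ->
  pt_basic [ffun rc => if rc == ab then x else 0].
Proof.
move=> nx; exists set0; rewrite ptrans_set0 /ptmx_rank.
have -> : \matrix_(a < #|{: midx}|, b < #|{: midx}|)
            [ffun rc => if rc == ab then x else 0] (enum_val a, enum_val b)
          = x *: delta_mx (enum_rank ab.1) (enum_rank ab.2).
  apply/matrixP => a b; rewrite !mxE ffunE.
  case: ab => a0 b0 /=; rewrite xpair_eqE.
  have E (i : 'I_#|{: midx}|) y : (enum_val i == y) = (i == enum_rank y).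
    by apply/eqP/eqP => [<-|->]; rewrite ?enum_valK ?enum_rankK.
  rewrite !E.
  by case: (a == _); case: (b == _); rewrite /= ?mulr1 ?mulr0.
by rewrite mxrank_scale_nz // mxrank_delta.
Qed.

Lemma pt_decomp_exists (M : ptmx) : exists r, pt_decompb M r.
Proof.
pose s := [seq [ffun rc => if rc == ab then M ab else 0]
          | ab <- enum [pred ab | M ab != 0]].
exists (size s); apply/pt_decompbP; exists s; split => //.
  move=> A /mapP [ab]; rewrite mem_enum inE => nz ->.
  exact: pt_basic_elem.
apply/ffunP => rc; rewrite sum_ffunE big_map big_enum_cond /=.
under eq_bigr do rewrite ffunE.
case: (boolP (M rc != 0)) => nz.
  rewrite (bigD1 rc) /=; last by rewrite inE nz.
  rewrite eqxx big1 ?addr0 // => ab /andP [_ /negbTE].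
  by rewrite eq_sym => ->.
rewrite big1; first by move: nz; rewrite negbK => /eqP.
by move=> ab nab; case: eqP => // <-; move: nz; rewrite negbK => /eqP.
Qed.

Definition ptrank (M : ptmx) : nat := ex_minn (pt_decomp_exists M).

End PT.

(* Blocking coordinates of [n]^(p*q) into q blocks of p consecutive
   coordinates: the l-th block (0-based) consists of coordinates
   l*p, ..., l*p + p - 1. *)
Lemma blk_div_lt (p q : nat) (i : 'I_(p * q)) : (i %/ p < q)%N.
Proof.
case: p i => [|p] i; first by case: i.
case: i => i /= Hi; by rewrite ltn_divLR // mulnC.
Qed.

Lemma blk_mod_lt (p q : nat) (i : 'I_(p * q)) : (i %% p < p)%N.
Proof.
case: p i => [|p] i; first by case: i.
by case: i => i /=; rewrite ltn_mod.
Qed.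

Definition flatten_idx (n p q : nat) (y : {ffun 'I_q -> {ffun 'I_p -> 'I_n}})
  : {ffun 'I_(p * q) -> 'I_n} :=
  [ffun i : 'I_(p * q) => y (Ordinal (blk_div_lt i)) (Ordinal (blk_mod_lt i))].

(* The same matrix M (flat indexing) viewed with index set ([n]^p)^q. *)
Definition blocked_mx (F : fieldType) (n p q : nat)
  (M : ptmx F 'I_n (p * q)) : ptmx F {ffun 'I_p -> 'I_n} q :=
  [ffun rc => M (flatten_idx rc.1, flatten_idx rc.2)].

(* Main.v *)
Require Import Defs.
From mathcomp Require Import all_boot all_order all_algebra.
Set Implicit Arguments. Unset Strict Implicit. Unset Printing Implicit Defensive.
Import GRing.Theory.
Local Open Scope ring_scope.

Lemma rank_mxsub (F : fieldType) m1 n1 m2 n2 (f : 'I_m2 -> 'I_m1) (g : 'I_n2 -> 'I_n1)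
  (A : 'M[F]_(m1, n1)) : (\rank (mxsub f g A) <= \rank A)%N.
Proof.
have -> : mxsub f g A = rowsub f (rowsub g A^T)^T.
  by apply/matrixP => i j; rewrite !mxE.
apply: leq_trans (mxrankS (rowsub_sub _ _)) _.
by rewrite mxrank_tr (leq_trans (mxrankS (rowsub_sub _ _))) // mxrank_tr.
Qed.

Section Blk.
Variables (F : fieldType) (n p q : nat).
Hypothesis hp : (0 < p)%N.

Lemma idx_lt (l : 'I_q) (j : 'I_p) : (l * p + j < p * q)%N.
Proof.
case: l j => l Hl [j Hj] /=.
have : (l * p + j < l * p + p)%N by rewrite ltn_add2l.
move/leq_trans; apply; rewrite -mulSnr mulnC leq_mul2l Hl orbT //.
Qed.

Definition idx (l : 'I_q) (j : 'I_p) : 'I_(p * q) := Ordinal (idx_lt l j).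

Lemma idx_div l j : Ordinal (blk_div_lt (idx l j)) = l.
Proof. apply: val_inj => /=; rewrite divnMDl // divn_small ?addn0 //. Qed.

Lemma idx_mod l j : Ordinal (blk_mod_lt (idx l j)) = j.
Proof. apply: val_inj => /=; rewrite modnMDl modn_small //. Qed.

Definition unflat (x : {ffun 'I_(p * q) -> 'I_n}) : {ffun 'I_q -> {ffun 'I_p -> 'I_n}} :=
  [ffun l => [ffun j => x (idx l j)]].

Lemma flat_unflat x : flatten_idx (unflat x) = x.
Proof.
apply/ffunP => i; rewrite !ffunE.
congr (x _); apply: val_inj => /=; by rewrite -divn_eq.
Qed.

Lemma unflat_flat y : unflat (flatten_idx y) = y.
Proof.
apply/ffunP => l; apply/ffunP => j; rewrite !ffunE idx_div idx_mod //.
Qed.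

Definition U (B : ptmx F {ffun 'I_p -> 'I_n} q) : ptmx F 'I_n (p * q) :=
  [ffun rc => B (unflat rc.1, unflat rc.2)].

Definition kap (kappa : {set 'I_q}) : {set 'I_(p * q)} :=
  [set i : 'I_(p * q) | Ordinal (blk_div_lt i) \in kappa].

Lemma U_ptrans kappa B : ptrans (kap kappa) (U B) = U (ptrans kappa B).
Proof.
apply/ffunP => -[r c]; rewrite !ffunE /ptswap /=.
congr (B (_, _)); apply/ffunP => l; apply/ffunP => j;
  rewrite !ffunE inE idx_div; case: (l \in kappa); rewrite ffunE //.
Qed.

Lemma U_rank C : ptmx_rank (U C) = ptmx_rank C.
Proof.
rewrite /ptmx_rank; apply/eqP; rewrite eqn_leq; apply/andP; split.
  pose f := fun a : 'I_#|{: midx 'I_n (p * q)}| => (enum_rank (unflat (enum_val a)) : 'I_#|{: midx {ffun 'I_p -> 'I_n} q}|).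
  set A := (X in (_ <= \rank X)%N).
  have -> : (\matrix_(a, b) U C (enum_val a, enum_val b)) = mxsub f f A.
    by apply/matrixP => a b; rewrite !mxE ffunE /f /= !enum_rankK.
  exact: rank_mxsub.
pose g := fun a : 'I_#|{: midx {ffun 'I_p -> 'I_n} q}| => (enum_rank (flatten_idx (enum_val a)) : 'I_#|{: midx 'I_n (p * q)}|).
set A := (X in (_ <= \rank X)%N).
have -> : (\matrix_(a, b) C (enum_val a, enum_val b)) = mxsub g g A.
  by apply/matrixP => a b; rewrite !mxE ffunE /g /= !enum_rankK !unflat_flat.
exact: rank_mxsub.
Qed.

Lemma U_basic B : pt_basic B -> pt_basic (U B).
Proof.
by case=> kappa Hk; exists (kap kappa); rewrite U_ptrans U_rank.
Qed.

Lemma U_sum (s : seq (ptmx F {ffun 'I_p -> 'I_n} q)) :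
  U (\sum_(A <- s) A) = \sum_(A <- map U s) A.
Proof.
apply/ffunP => rc; rewrite big_map !ffunE !sum_ffunE.
by apply: eq_bigr => A _; rewrite ffunE.
Qed.

End Blk.

Theorem lemma3p11 (F : fieldType) (n p q : nat)
  (hn : (1 <= n)%N) (hp : (1 <= p)%N) (hq : (1 <= q)%N)
  (M : ptmx F 'I_n (p * q)) :
  (ptrank M <= ptrank (blocked_mx M))%N.
Proof.
rewrite {2}/ptrank; case: ex_minnP => r /pt_decompbP [s [Hs Hb Hsum]] _.
rewrite /ptrank; case: ex_minnP => r' _ Hmin; apply: Hmin.
apply/pt_decompbP; exists (map (@U F n p q) s); split.
- by rewrite size_map.
- move=> A /mapP [B HB ->]; apply: (U_basic hp); exact: Hb.
rewrite -U_sum Hsum; apply/ffunP => rc; rewrite !ffunE /= !flat_unflat.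
by case: rc.
Qed.
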